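(* Let $G$ be a rooted graph. For any integers $k,g\ge 0$ and $m,h\ge 1$, \begin{align*} X_{S_h^{gk}(G,\,K_m)}&=(m-1)!\Bigg(\sum_{z=0}^{m-1}e_z\,X_{G^{g+h+k+m-z-1}}-\sum_{z=1}^{m-1}\frac{X_{K_z^h}}{(z-1)!}\,X_{G^{g+k+m-z-1}}\Bigg)\\ &\qquad+\sum_{z=0}^{k-1}\Big(X_{K_m^{z}}\,X_{G^{g+h+k-z-1}}-X_{K_m^{h+z}}\,X_{G^{g+k-z-1}}\Big). \end{align*}
   Context: All graphs are finite simple graphs. The chromatic symmetric function of a graph $G$ is $X_G=\sum_{\kappa}\prod_{v\in V(G)}x_{\kappa(v)}$, where $\kappa$ ranges over proper colorings $\kappa:V(G)\to\{1,2,\dots\}$; $e_z$ is the $z$-th elementary symmetric function, $e_0=1$. For a rooted graph $G$ and $t\ge0$, $G^t$ is $G$ with a pendant path of length $t$ attached at its root; $K_s^t$ is the lollipop ($K_s$ with a pendant path of length $t$ at one vertex). $S_h^{gk}(G,K_m)$ is the graph obtained by taking a center vertex $c$ and three paths from $c$, disjoint except at $c$, of lengths $g$, $k$, $h$, identifying the far end of the first path (or $c$ if $g=0$) with the root of $G$, identifying the far end of the second path (or $c$ if $k=0$) with a vertex of a disjoint complete graph $K_m$, and leaving the third path as a pendant path ending at a leaf. *)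

(* Defs.v *)
From HB Require Import structures.
From mathcomp Require Import all_boot all_order all_algebra.
From mathcomp Require Import mpoly.
Set Implicit Arguments. Unset Strict Implicit. Unset Printing Implicit Defensive.
Import GRing.Theory.
Local Open Scope ring_scope.

(* A finite graph: a finite vertex type with an adjacency relation.
   Simplicity (symmetric, irreflexive) is imposed as hypotheses where needed;
   all constructions below preserve it. *)
Record graph := Graph { gV : finType; gE : rel gV }.

(* Gluing: disjoint union of G1 and G2 with vertex b of G2 identified with
   vertex a of G1 (a is kept, b is removed). *)
Definition glueV (G1 : graph) (G2 : graph) (b : gV G2) : finType :=
  (gV G1 + {x : gV G2 | x != b})%type.

Definition glueE (G1 : graph) (a : gV G1) (G2 : graph) (b : gV G2)
  (u w : glueV G1 b) : bool :=
  match u, w with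
  | inl x, inl y => gE x y
  | inr x, inr y => gE (val x) (val y)
  | inl x, inr y => (x == a) && gE b (val y)
  | inr x, inl y => (y == a) && gE (val x) b
  end.

Definition glue (G1 : graph) (a : gV G1) (G2 : graph) (b : gV G2) : graph :=
  @Graph (glueV G1 b) (@glueE G1 a G2 b).

Definition glue_in2 (G1 : graph) (a : gV G1) (G2 : graph) (b : gV G2)
  (v : gV G2) : gV (glue a b) :=
  match insub v : option {x : gV G2 | x != b} with
  | Some x => inr x
  | None => inl a
  end.

(* The path with t edges, on vertices 0..t. *)
Definition path_graph (t : nat) : graph :=
  @Graph 'I_t.+1 (fun i j => (i.+1 == j :> nat) || (j.+1 == i :> nat)).

Definition complete (s : nat) : graph := @Graph 'I_s (fun i j => i != j).

Definition pendant (G : graph) (r : gV G) (t : nat) : graph :=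
  glue r (ord0 : gV (path_graph t)).

(* Lollipop K_s^t (for s >= 1): K_s with a pendant path of length t at a
   vertex.  (K_s is written 'I_s.-1.+1 so that it has a vertex; equal to K_s
   for s >= 1, the only case used.) *)
Definition lollipop (s t : nat) : graph :=
  pendant (ord0 : gV (complete s.-1.+1)) t.

Definition tripod1 (g k : nat) : graph :=
  glue (ord0 : gV (path_graph g)) (ord0 : gV (path_graph k)).
Definition tripod (g k h : nat) : graph :=
  glue (inl ord0 : gV (tripod1 g k)) (ord0 : gV (path_graph h)).
Definition tri_gend (g k h : nat) : gV (tripod g k h) :=
  inl (inl ord_max).
Definition tri_kend (g k h : nat) : gV (tripod g k h) :=
  inl (glue_in2 (ord0 : gV (path_graph g)) (ord0 : gV (path_graph k)) ord_max).

Definition Sgraph1 (G : graph) (r : gV G) (g k h : nat) : graph :=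
  glue r (tri_gend g k h).

Definition Sgraph (G : graph) (r : gV G) (g k h m : nat) : graph :=
  glue (glue_in2 r (tri_gend g k h) (tri_kend g k h))
       (ord0 : gV (complete m.-1.+1)).

Definition proper (G : graph) (n : nat) (f : {ffun gV G -> 'I_n}) : bool :=
  [forall u, forall v, gE u v ==> (f u != f v)].

(* Chromatic symmetric function X_G, specialized to n variables x_0..x_{n-1}
   (colours >= n set to 0).  Equality of symmetric functions is equality of
   these specializations for every n. *)
Definition chrom (n : nat) (G : graph) : {mpoly rat[n]} :=
  \sum_(f : {ffun gV G -> 'I_n} | proper f) \prod_(v : gV G) 'X_(f v).

(* Main.v *)
Require Import Defs.
From HB Require Import structures.
From mathcomp Require Import all_boot all_order all_algebra.
From mathcomp Require Import mpoly.
From mathcomp Require Import zify ring.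
Set Implicit Arguments. Unset Strict Implicit. Unset Printing Implicit Defensive.
Import GRing.Theory.
Local Open Scope ring_scope.

Module P1.

Section Phi.
Variable n : nat.
Local Notation R := {mpoly rat[n]}.
Local Notation I := 'I_n.

Definition Phi (H : graph) (w : gV H -> I -> R) : R :=
  \sum_(f : {ffun gV H -> I} | Defs.proper f) \prod_v w v (f v).
Definition PhiR (H : graph) (v : gV H) (c : I) (w : gV H -> I -> R) : R :=
  \sum_(f : {ffun gV H -> I} | Defs.proper f && (f v == c)) \prod_(u | u != v) w u (f u).

Lemma chromE H : chrom n H = @Phi H (fun _ d => 'X_d).
Proof. by []. Qed.

Lemma Phi_root H (v : gV H) w : Phi w = \sum_c w v c * PhiR v c w.
Proof.
rewrite /Phi (partition_big (fun f : {ffun gV H -> I} => f v) predT) //=.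
apply: eq_bigr => c _; rewrite /PhiR mulr_sumr; apply: eq_bigr => f /andP[_ /eqP <-].
by rewrite (bigD1 v).
Qed.

Lemma PhiR_ext H (v : gV H) c w w' : (forall u, u != v -> w u =1 w' u) ->
  PhiR v c w = PhiR v c w'.
Proof.
move=> E; apply: eq_bigr => f _; apply: eq_bigr => u /E; apply.
Qed.

Lemma Phi_ext H w w' : (forall u, w u =1 w' u) -> @Phi H w = Phi w'.
Proof. by move=> E; apply: eq_bigr => f _; apply: eq_bigr => u _; apply: E. Qed.

Lemma PhiR_delta H (v : gV H) c s w :
  Phi (fun u e => if u == v then (e == c)%:R * s e else w u e) = s c * PhiR v c w.
Proof.
rewrite (Phi_root v) (bigD1 c) //= (eqxx v) (eqxx c) mul1r big1 ?addr0.
  by congr (_ * _); apply: PhiR_ext => u /negbTE ->.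
by move=> e /negbTE ne; rewrite ne !mul0r.
Qed.

Lemma PhiR_Phi H (v : gV H) c w :
  PhiR v c w = Phi (fun u e => if u == v then (e == c)%:R else w u e).
Proof.
rewrite -[LHS]mul1r -(PhiR_delta v c (fun _ => 1)); apply: Phi_ext => u e.
by case: ifP => //; rewrite mulr1.
Qed.

End Phi.

End P1.
Import P1.

Module P2.

Section Glue.
Variable n : nat.
Local Notation R := {mpoly rat[n]}.
Local Notation I := 'I_n.

Lemma gproperP (H : graph) (f : {ffun gV H -> I}) :
  reflect (forall u v, gE u v -> f u != f v) (Defs.proper f).
Proof.
apply: (iffP forallP) => [P u v e | P u].
  by have /forallP/(_ v)/implyP := P u; apply.
by apply/forallP => v; apply/implyP; apply: P.
Qed.

Variables (G1 G2 : graph) (a : gV G1) (b : gV G2).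

Lemma glue_in2_inr (y : {x : gV G2 | x != b}) : glue_in2 a b (val y) = inr y.
Proof. by rewrite /glue_in2 valK. Qed.

Lemma glue_in2_b : glue_in2 a b b = inl a.
Proof. by rewrite /glue_in2 insubF // eqxx. Qed.

Definition comb (f1 : {ffun gV G1 -> I}) (f2 : {ffun gV G2 -> I}) :
  {ffun gV (glue a b) -> I} :=
  [ffun u => match u with inl x => f1 x | inr y => f2 (val y) end].

Definition uncomb (f : {ffun gV (glue a b) -> I}) :=
  ([ffun x => f (inl x)], [ffun v => f (glue_in2 a b v)]).

Lemma comb_uncomb f : comb (uncomb f).1 (uncomb f).2 = f.
Proof.
by apply/ffunP => -[x|y]; rewrite !ffunE /= ?(glue_in2_inr y).
Qed.

Lemma uncomb_comb f1 f2 : (uncomb (comb f1 f2) == (f1, f2)) = (f2 b == f1 a).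
Proof.
apply/eqP/eqP => [[_ <-]|E].
  by rewrite ffunE glue_in2_b /comb ffunE.
rewrite /uncomb /comb; congr pair; apply/ffunP => v; rewrite !ffunE //.
have [->|nb] := eqVneq v b; first by rewrite glue_in2_b E.
by rewrite -[v]/(val (exist _ v nb : {x | x != b})) glue_in2_inr.
Qed.

Hypothesis Hb : ~~ gE b b.

Lemma proper_comb f1 f2 :
  Defs.proper (comb f1 f2) && (f2 b == f1 a) =
  Defs.proper f1 && (Defs.proper f2 && (f2 b == f1 a)).
Proof.
case: (eqVneq (f2 b) (f1 a)) => E; last by rewrite !andbF.
rewrite !andbT; apply/idP/andP.
  move/gproperP => P; split; apply/gproperP.
    by move=> x y e; have := P (inl x) (inl y) e; rewrite !ffunE.
  move=> v v' e.
  case: (eqVneq v b) => [Ev|nv]; case: (eqVneq v' b) => [Ev'|nv'].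
  - by move: e; rewrite Ev Ev' (negbTE Hb).
  - have := P (inl a) (inr (exist _ v' nv')); rewrite !ffunE /= eqxx Ev E; apply.
    by rewrite /= -Ev.
  - have := P (inr (exist _ v nv)) (inl a); rewrite !ffunE /= eqxx Ev' E; apply.
    by rewrite /= -Ev'.
  - by have := P (inr (exist _ v nv)) (inr (exist _ v' nv')); rewrite !ffunE /=; apply.
case=> /gproperP P1 /gproperP P2; apply/gproperP => -[x|y] [x'|y']; rewrite !ffunE /=.
- exact: P1.
- by case/andP => /eqP -> e; rewrite -E; apply: P2.
- by case/andP => /eqP -> e; rewrite -E; apply: P2.
- exact: P2.
Qed.

Lemma prod_sub (F : gV G2 -> R) :
  \prod_(v | v != b) F v = \prod_(y : {x : gV G2 | x != b}) F (val y).
Proof. exact: (big_sub (op := *%R) (predC1 b) F). Qed.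

Lemma Phi_glue (w : gV (glue a b) -> I -> R) :
  Phi w = Phi (fun u d => w (inl u) d *
             (if u == a then PhiR b d (fun v => w (glue_in2 a b v)) else 1)).
Proof.
rewrite /Phi (reindex_onto (fun p => comb p.1 p.2) uncomb); last first.
  by move=> f _; apply: comb_uncomb.
rewrite (eq_bigl (fun p => Defs.proper p.1 && (Defs.proper p.2 && (p.2 b == p.1 a)))); last first.
  by move=> [f1 f2] /=; rewrite uncomb_comb proper_comb.
transitivity (\sum_(f1 : {ffun gV G1 -> I} | Defs.proper f1)
  \sum_(f2 : {ffun gV G2 -> I} | Defs.proper f2 && (f2 b == f1 a))
     \prod_u w u (comb f1 f2 u)).
  by rewrite pair_big_dep.
apply: eq_bigr => f1 _.
rewrite big_split /= -big_mkcond big_pred1_eq /PhiR mulr_sumr.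
apply: eq_bigr => f2 _.
rewrite big_sumType /=; congr (_ * _).
  by apply: eq_bigr => x _; rewrite ffunE.
by rewrite prod_sub; apply: eq_bigr => y _; rewrite ffunE /= glue_in2_inr.
Qed.
End Glue.

End P2.
Import P2.

Module P3.

Section Path.
Variable n : nat.
Local Notation R := {mpoly rat[n]}.
Local Notation I := 'I_n.

Lemma Phi_iso (H1 H2 : graph) (phi : gV H1 -> gV H2) (psi : gV H2 -> gV H1)
  (K1 : cancel phi psi) (K2 : cancel psi phi)
  (E : forall u v, gE (phi u) (phi v) = gE u v) (w : gV H2 -> I -> R) :
  Phi w = Phi (fun u => w (phi u)).
Proof.
rewrite /Phi (reindex (fun f1 : {ffun gV H1 -> I} => [ffun v => f1 (psi v)])); last first.
  exists (fun f2 : {ffun gV H2 -> I} => [ffun u => f2 (phi u)]) => f _;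
    by apply/ffunP => x; rewrite !ffunE ?K1 ?K2.
apply: eq_big => f1.
  apply/gproperP/gproperP => P u v.
    by rewrite -E => /P; rewrite !ffunE !K1.
  by move=> e; rewrite !ffunE; apply: P; rewrite -E !K2.
move=> _; rewrite (reindex phi) /=; last by exists psi => x _.
by apply: eq_bigr => u _; rewrite ffunE K1.
Qed.

Definition consf t (p : I * {ffun 'I_t.+1 -> I}) : {ffun 'I_t.+2 -> I} :=
  [ffun i => if unlift ord0 i is Some j then p.2 j else p.1].

Lemma proper_consf t e f' :
  Defs.proper (consf (e, f') : {ffun gV (path_graph t.+1) -> I}) =
  (e != f' ord0) && Defs.proper (f' : {ffun gV (path_graph t) -> I}).
Proof.
apply/gproperP/andP => [P|[ne /gproperP P] i j].
  split.
    have := P ord0 (lift ord0 ord0); rewrite !ffunE liftK unlift_none; apply.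
    by rewrite /= /bump /=.
  apply/gproperP => i j e'; have := P (lift ord0 i) (lift ord0 j).
  by rewrite !ffunE !liftK; apply; move: e'; rewrite /= /bump /=.
rewrite !ffunE /=.
case: unliftP => [i'|] ->; case: unliftP => [j'|] -> //=; rewrite /bump /=.
- by rewrite !add1n => /P.
- move=> /eqP i0; have -> : i' = ord0 by apply/val_inj; rewrite /=; lia.
  by rewrite eq_sym.
- case/orP => [/eqP j0|//].
  by have -> : j' = ord0 by apply/val_inj; rewrite /=; lia.
Qed.

Definition Lop (v : I -> R) : I -> R := fun c => \sum_(e | e != c) 'X_e * v e.
Definition Lpow t v := iter t Lop v.

Definition pw t (al be : I -> R) : gV (path_graph t) -> I -> R :=
  fun i e => (if i == ord0 then al e else 'X_e) * (if i == ord_max then be e else 1).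
Arguments pw : clear implicits.

Lemma Phi_pathS t (w : gV (path_graph t.+1) -> I -> R) :
  Phi w = Phi (H := path_graph t) (fun i d => w (lift ord0 i) d *
            (if i == ord0 then \sum_(e | e != d) w ord0 e else 1)).
Proof.
rewrite /Phi (reindex (@consf t)); last first.
  exists (fun f : {ffun 'I_t.+2 -> I} => (f ord0, [ffun j => f (lift ord0 j)])).
    by move=> [e f'] _; congr pair; rewrite ?ffunE ?unlift_none //;
       apply/ffunP => j; rewrite !ffunE liftK.
  move=> f _; apply/ffunP => i; rewrite !ffunE.
  by case: unliftP => [j|] ->; rewrite ?ffunE.
rewrite big_mkcond /=.
rewrite -(pair_bigA _ (fun e (f' : {ffun 'I_t.+1 -> I}) =>
   if Defs.proper (consf (e, f') : {ffun gV (path_graph t.+1) -> I})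
   then \prod_i w i (consf (e, f') i) else 0)) exchange_big /=.
rewrite [RHS]big_mkcond; apply: eq_bigr => f' _.
case: (boolP (Defs.proper (f' : {ffun gV (path_graph t) -> I}))) => pf; last first.
  by rewrite big1 // => e _; rewrite proper_consf (negbTE pf) andbF.
rewrite (eq_bigr (fun e => if e != f' ord0 then \prod_i w i (consf (e, f') i) else 0)); last first.
  by move=> e _; rewrite proper_consf pf andbT.
rewrite -big_mkcond big_split /= -big_mkcond big_pred1_eq mulr_sumr.
apply: eq_bigr => e _; rewrite big_ord_recl !ffunE unlift_none mulrC; congr (_ * _).
by apply: eq_bigr => j _; rewrite ffunE liftK.
Qed.

Lemma ord1_eq (i j : 'I_1) : i = j.
Proof. by apply/val_inj; case: i => [[]] // ?; case: j => [[]]. Qed.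

Lemma PhiR_path0 (c : I) (w : gV (path_graph 0) -> I -> R) : PhiR (H := path_graph 0) ord0 c w = 1.
Proof.
rewrite /PhiR (big_pred1 [ffun => c]); last first.
  move=> f; rewrite /=; apply/andP/eqP => [[_ /eqP E]|->].
    by apply/ffunP => i; rewrite ffunE (ord1_eq i ord0).
  split; last by rewrite ffunE.
  by apply/gproperP => i j; rewrite (ord1_eq i ord0) (ord1_eq j ord0).
by rewrite big_pred0 // => i; rewrite (ord1_eq i ord0) eqxx.
Qed.

Lemma Lpow_ext t (u v : I -> R) : u =1 v -> Lpow t u =1 Lpow t v.
Proof.
elim: t => [//|t IH] E c /=; apply: eq_bigr => e _; by rewrite IH.
Qed.

Lemma Phi_path t (al be : I -> R) : Phi (pw t al be) = \sum_c al c * Lpow t be c.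
Proof.
elim: t al => [|t IH] al.
  rewrite (@Phi_root _ (path_graph 0) ord0); apply: eq_bigr => c _.
  by rewrite PhiR_path0 mulr1 /pw /=.
rewrite Phi_pathS.
rewrite (Phi_ext (w' := pw t (fun d => 'X_d * \sum_(e | e != d) al e) be)); last first.
  move=> i d; rewrite /pw.
  have -> : (lift ord0 i == ord0) = false by [].
  have -> : (lift ord0 i == ord_max) = (i == ord_max).
    by rewrite -!val_eqE /= /bump /= add1n eqSS.
  case: (eqVneq i ord0) => [->|_]; last by rewrite mulr1.
  rewrite (eq_bigr (fun e => al e)); last by move=> e _; rewrite !eqE /= mulr1.
  by rewrite mulrAC.
rewrite IH /=.
rewrite (eq_bigr (fun c => \sum_(e | e != c) 'X_c * al e * Lpow t be c)); last first.
  by move=> c _; rewrite mulr_sumr mulr_suml; apply: eq_bigr => e _; ring.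
rewrite (exchange_big_dep xpredT) //=; apply: eq_bigr => j _.
rewrite /Lop mulr_sumr; apply: eq_big => [c|c _]; first by rewrite eq_sym.
ring.
Qed.

Lemma rev_ordE t (i : 'I_t.+1) : val (rev_ord i) = (t - i)%N.
Proof. by rewrite /= subSS. Qed.

Lemma Phi_path_rev t (w : gV (path_graph t) -> I -> R) :
  Phi w = Phi (H := path_graph t) (fun i : 'I_t.+1 => w (rev_ord i)).
Proof.
apply: Phi_iso; try exact: rev_ordK.
move=> i j; rewrite /= !subSS.
have := ltn_ord i; have := ltn_ord j.
by move=> Hj Hi; apply/orP/orP => -[/eqP E|/eqP E]; [right|left|right|left]; apply/eqP; lia.
Qed.

Lemma Phi_path' t (al be : I -> R) :
  Phi (H := path_graph t) (fun i e => (if i == ord_max then al e else 'X_e) *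
                                      (if i == ord0 then be e else 1))
  = \sum_c al c * Lpow t be c.
Proof.
rewrite Phi_path_rev -Phi_path; apply: Phi_ext => i e; rewrite /pw.
have -> : (rev_ord i == ord_max) = (i == ord0).
  by have := ltn_ord i; rewrite -!val_eqE rev_ordE /= => Hi; apply/eqP/eqP; lia.
have -> : (rev_ord i == ord0) = (i == ord_max).
  by have := ltn_ord i; rewrite -!val_eqE rev_ordE /= => Hi; apply/eqP/eqP; lia.
by [].
Qed.

End Path.

End P3.
Import P3.

Module P4.

Section Complete.
Variable n : nat.
Local Notation R := {mpoly rat[n]}.
Local Notation I := 'I_n.

Definition consg t (p : I * {ffun 'I_t -> I}) : {ffun 'I_t.+1 -> I} :=
  [ffun i => if unlift ord0 i is Some j then p.2 j else p.1].

Lemma proper_complete t (f : {ffun 'I_t -> I}) :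
  Defs.proper (f : {ffun gV (complete t) -> I}) = injectiveb f.
Proof.
apply/gproperP/injectiveP => [P u v E|P u v /= ne].
  by apply/eqP/negPn/negP => /P; rewrite E eqxx.
by apply: contra ne => /eqP /P ->.
Qed.

Lemma inj_consg t e (f' : {ffun 'I_t -> I}) :
  injectiveb (consg (e, f')) = (e \notin codom f') && injectiveb f'.
Proof.
apply/injectiveP/andP => [P|[ne /injectiveP P] i j].
  split.
    apply/negP => /codomP [j E].
    have := P ord0 (lift ord0 j); rewrite !ffunE unlift_none liftK /= => /(_ E) E'.
    by move/eqP: (neq_lift ord0 j); apply.
  apply/injectiveP => x y E; apply: (@lift_inj _ ord0); apply: P.
  by rewrite !ffunE !liftK.
rewrite !ffunE.
case: unliftP => [i'|] ->; case: unliftP => [j'|] -> //=.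
- by move=> /P ->.
- by move=> E; move: ne; rewrite -E codom_f.
- by move=> E; move: ne; rewrite E codom_f.
Qed.

Definition eps k (c : I) : R :=
  \sum_(S : {set I} | (#|S| == k) && (c \notin S)) \prod_(i in S) 'X_i.

Lemma kappa_inj k (c : I) :
  PhiR (H := complete k.+1) ord0 c (fun _ d => 'X_d) =
  \sum_(f : {ffun 'I_k -> I} | injectiveb f && (c \notin codom f)) \prod_j 'X_(f j).
Proof.
rewrite /PhiR (reindex (@consg k)); last first.
  exists (fun f : {ffun 'I_k.+1 -> I} => (f ord0, [ffun j => f (lift ord0 j)])).
    by move=> [e f'] _; congr pair; rewrite ?ffunE ?unlift_none //;
       apply/ffunP => j; rewrite !ffunE liftK.
  move=> f _; apply/ffunP => i; rewrite !ffunE.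
  by case: unliftP => [j|] ->; rewrite ?ffunE.
rewrite (eq_bigl (fun p : I * {ffun 'I_k -> I} => (p.1 == c) && (injectiveb p.2 && (c \notin codom p.2)))); last first.
  move=> [e f'] /=; rewrite proper_complete inj_consg ffunE unlift_none.
  by rewrite /=; case: eqP => [->|]; rewrite ?andbF // andbT andbC.
transitivity (\sum_(e : I | e == c) \sum_(f' : {ffun 'I_k -> I} | injectiveb f' && (c \notin codom f'))
   \prod_(u | u != ord0) ('X_(consg (e, f') u) : R)).
  by rewrite pair_big_dep.
rewrite big_pred1_eq; apply: eq_bigr => f' _.
rewrite big_mkcond big_ord_recl /= mul1r; apply: eq_bigr => j _.
by rewrite !ffunE liftK.
Qed.


Lemma inj_sum k (c : I) :
  \sum_(f : {ffun 'I_k -> I} | injectiveb f && (c \notin codom f)) \prod_j ('X_(f j) : R)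
  = k`!%:R * eps k c.
Proof.
rewrite (partition_big (fun f : {ffun 'I_k -> I} => f @: setT)
           (fun S : {set I} => (#|S| == k) && (c \notin S))); last first.
  move=> f /andP[/injectiveP inj cn]; rewrite card_imset // cardsT card_ord eqxx /=.
  by apply/imsetP => -[j _ E]; move: cn; rewrite E codom_f.
rewrite /eps mulr_sumr; apply: eq_bigr => S /andP[/eqP cS cnS].
rewrite [LHS](eq_bigr (fun _ => \prod_(i in S) 'X_i)); last first.
  move=> f /andP[/andP[/injectiveP inj _] /eqP <-].
  by rewrite big_imset /=; [apply: eq_bigl => j; rewrite in_setT | move=> x y _ _; apply: inj].
rewrite [LHS](eq_bigl (fun f => f \in [set f in ffun_on S | injectiveb f])); last first.
  move=> f; rewrite inE; apply/andP/andP => [[/andP[inj _] /eqP <-]|[/ffun_onP onS inj]].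
    by split=> //; apply/ffun_onP => x; apply: imset_f.
  have E : f @: setT = S.
    apply/eqP; rewrite eqEcard; apply/andP; split.
      by apply/subsetP => y /imsetP [x _ ->]; apply: onS.
    by rewrite card_imset; [rewrite cardsT card_ord cS | apply/injectiveP].
  split; last by rewrite E.
  rewrite inj /=; apply/negP => /codomP [x Ex]; move: cnS; rewrite Ex.
  by move/negP; apply; apply: onS.
by rewrite sumr_const card_inj_ffuns_on card_ord cS ffactnn mulr_natl.
Qed.

Lemma kappa_eps k (c : I) :
  PhiR (H := complete k.+1) ord0 c (fun _ d => 'X_d) = k`!%:R * eps k c.
Proof. by rewrite kappa_inj inj_sum. Qed.

Lemma eps0 (c : I) : eps 0 c = 1.
Proof.
rewrite /eps (big_pred1 set0) ?big_set0 // => S /=.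
by rewrite cards_eq0; case: eqP => // ->; rewrite in_set0.
Qed.

Lemma mesym_eps j (c : I) : mesym n rat j.+1 = eps j.+1 c + 'X_c * eps j c.
Proof.
rewrite /mesym (bigID (fun S : {set I} => c \in S)) /= addrC; congr (_ + _).
rewrite /eps mulr_sumr.
rewrite (reindex_onto (fun S => c |: S) (fun S => S :\ c)); last first.
  by move=> S /andP[_ cS]; rewrite setD1K.
have key S : ((c |: S) :\ c == S) = (c \notin S).
  case: (boolP (c \in S)) => cS /=.
    apply/negbTE/negP => /eqP E.
    by have := cS; rewrite -E !inE eqxx.
  by rewrite setU1K // eqxx.
apply: eq_big => S; rewrite key.
  case: (boolP (c \in S)) => cS /=; first by rewrite !andbF.
  by rewrite cardsU1 cS setU11 /= add1n eqSS !andbT.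
by move=> /andP[_ cS]; rewrite big_setU1.
Qed.


End Complete.

End P4.
Import P4.

Module P5.

Section Vec.
Variable n : nat.
Local Notation R := {mpoly rat[n]}.
Local Notation I := 'I_n.
Local Notation Lop := (@Lop n).
Local Notation Lpow := (@Lpow n).

Definition onev : I -> R := fun _ => 1.
Definition Sv (v : I -> R) : R := \sum_e 'X_e * v e.
Definition pair (u v : I -> R) : R := \sum_e 'X_e * u e * v e.
Definition Pp t := Lpow t onev.

Lemma LpowS t v : Lpow t.+1 v = Lop (Lpow t v).
Proof. by []. Qed.

Lemma Lop_ext u v : u =1 v -> Lop u =1 Lop v.
Proof. by move=> E c; apply: eq_bigr => e _; rewrite E. Qed.

Lemma Lop_alt v c : Lop v c = Sv v - 'X_c * v c.
Proof. by rewrite /Sv (bigD1 c) //= addrAC subrr add0r. Qed.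

Lemma Lpow_addn a b v : Lpow (a + b) v =1 Lpow a (Lpow b v).
Proof. by move=> c; rewrite /P3.Lpow iterD. Qed.

Lemma pair_L u v : pair u (Lop v) = pair (Lop u) v.
Proof.
rewrite /pair /P3.Lop.
rewrite (eq_bigr (fun e => \sum_(d | d != e) 'X_e * u e * ('X_d * v d))); last first.
  by move=> e _; rewrite mulr_sumr.
rewrite [RHS](eq_bigr (fun e => \sum_(d | d != e) 'X_e * ('X_d * u d) * v e)); last first.
  by move=> e _; rewrite mulr_sumr mulr_suml; apply: eq_bigr => d _; ring.
rewrite (exchange_big_dep xpredT) //=; apply: eq_bigr => e _.
by apply: eq_big => [d|d _]; [rewrite eq_sym | ring].
Qed.

Lemma pair_ext u u' v v' : u =1 u' -> v =1 v' -> pair u v = pair u' v'.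
Proof. by move=> E1 E2; apply: eq_bigr => e _; rewrite E1 E2. Qed.

Lemma pair_Lpow t u v : pair u (Lpow t v) = pair (Lpow t u) v.
Proof.
elim: t u v => [//|t IH] u v.
rewrite LpowS pair_L IH.
by apply: pair_ext => // c; rewrite -addn1 Lpow_addn.
Qed.

Lemma Sv_pair v : Sv v = pair onev v.
Proof. by apply: eq_bigr => e _; rewrite /onev mulr1. Qed.

Lemma Lpow_lin t (u v : I -> R) (a b : R) c :
  Lpow t (fun c => a * u c + b * v c) c = a * Lpow t u c + b * Lpow t v c.
Proof.
elim: t c => [//|t IH] c.
rewrite !LpowS (Lop_ext IH) /P3.Lop !mulr_sumr -big_split /=.
by apply: eq_bigr => e _; ring.
Qed.

Lemma Lpow_sum t (J : Type) (s : seq J) (P : pred J) (F : J -> I -> R) c :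
  Lpow t (fun c => \sum_(i <- s | P i) F i c) c = \sum_(i <- s | P i) Lpow t (F i) c.
Proof.
elim: t c => [//|t IH] c.
rewrite !LpowS (Lop_ext IH) /P3.Lop.
rewrite (eq_bigr (fun e => \sum_(i <- s | P i) 'X_e * Lpow t (F i) e)); last first.
  by move=> e _; rewrite mulr_sumr.
by rewrite exchange_big.
Qed.

Lemma Lpow_ext t u v : u =1 v -> Lpow t u =1 Lpow t v.
Proof. exact: P3.Lpow_ext. Qed.

Lemma Lpow_scal t (u : I -> R) (a : R) c :
  Lpow t (fun c => a * u c) c = a * Lpow t u c.
Proof.
rewrite -[RHS]addr0 -(mul0r (Lpow t u c)) -(Lpow_lin t u u a 0).
by apply: Lpow_ext => d; rewrite mul0r addr0.
Qed.

Lemma Lpow_add t (u v : I -> R) c :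
  Lpow t (fun c => u c + v c) c = Lpow t u c + Lpow t v c.
Proof.
rewrite -[Lpow t u c]mul1r -[Lpow t v c]mul1r -Lpow_lin.
by apply: Lpow_ext => d; rewrite !mul1r.
Qed.

Lemma Lpow_sub t (u v : I -> R) c :
  Lpow t (fun c => u c - v c) c = Lpow t u c - Lpow t v c.
Proof.
rewrite -[Lpow t u c]mul1r -mulN1r -Lpow_lin.
by apply: Lpow_ext => d; rewrite mul1r mulN1r.
Qed.

Lemma prod_rule (A w : I -> R) c :
  A c * Lop w c = Lop (fun d => A d * w d) c + Sv w * A c - Sv (fun d => A d * w d).
Proof. rewrite !Lop_alt; ring. Qed.

End Vec.

End P5.
Import P5.

Module P6.

Section Claims.
Variable n : nat.
Local Notation R := {mpoly rat[n]}.
Local Notation I := 'I_n.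
Local Notation Lop := (@Lop n).
Local Notation Lpow := (@Lpow n).
Local Notation Pp := (@Pp n).

Lemma Lop_Lpow1 (v : I -> R) c : Lop v c = Lpow 1 v c.
Proof. by []. Qed.

Lemma claimB (A : I -> R) j c :
  A c * eps j c =
  \sum_(0 <= z < j.+1) mesym n rat z * Lpow (j - z) A c
  - \sum_(1 <= z < j.+1) pair A (eps z.-1) * Pp (j - z) c.
Proof.
elim: j c => [|j IH] c.
  by rewrite eps0 mulr1 big_nat1 big_geq // mesym0E mul1r subr0.
have E1 : eps j.+1 c = mesym n rat j.+1 - 'X_c * eps j c.
  by rewrite (mesym_eps j c) addrK.
have E2 : 'X_c * (A c * eps j c) = Sv (fun d => A d * eps j d) - Lop (fun d => A d * eps j d) c.
  by rewrite Lop_alt; ring.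
have E3 : Sv (fun d => A d * eps j d) = pair A (eps j).
  by apply: eq_bigr => d _; rewrite mulrA.
have E4 : Lop (fun d => A d * eps j d) c =
   \sum_(0 <= z < j.+1) mesym n rat z * Lpow (j.+1 - z) A c
   - \sum_(1 <= z < j.+1) pair A (eps z.-1) * Pp (j.+1 - z) c.
  rewrite (Lop_ext IH c) Lop_Lpow1 Lpow_sub !Lpow_sum.
  congr (_ - _); apply: eq_big_nat => z /andP[_ Hz].
    by rewrite Lpow_scal subSn.
  by rewrite Lpow_scal subSn.
rewrite E1 mulrBr mulrCA E2 E3 E4.
rewrite (big_nat_recr j.+1) //= (big_nat_recr j.+1) //= subnn.
rewrite /Pp /onev /=; ring.
Qed.

Lemma claimK (kap : I -> R) h k c :
  Pp h c * Lpow k kap c =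
  Lpow k (fun d => Pp h d * kap d) c
  + \sum_(0 <= z < k) (pair (Pp z) kap * Pp (h + k - z - 1) c
                       - pair (Pp (h + z)) kap * Pp (k - z - 1) c).
Proof.
elim: k c => [|k IH] c.
  by rewrite big_geq // addr0.
rewrite LpowS prod_rule (Lop_ext IH c) Lop_Lpow1 Lpow_add Lpow_sum.
have E1 : Sv (Lpow k kap) = pair (Pp k) kap by rewrite Sv_pair pair_Lpow.
have E2 : Sv (fun d => Pp h d * Lpow k kap d) = pair (Pp (h + k)) kap.
  rewrite (_ : Sv _ = pair (Pp h) (Lpow k kap)); last first.
    by apply: eq_bigr => d _; rewrite mulrA.
  rewrite pair_Lpow; apply: pair_ext => // d.
  by rewrite /Pp addnC Lpow_addn.
rewrite E1 E2 (big_nat_recr k) //=.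
rewrite (_ : (h + k.+1 - k - 1)%N = h); last by lia.
rewrite (_ : (k.+1 - k - 1)%N = 0%N); last by lia.
rewrite [in RHS](eq_big_nat _ _ (F2 := fun z => Lpow 1 (fun d => pair (Pp z) kap * Pp (h + k - z - 1) d
                       - pair (Pp (h + z)) kap * Pp (k - z - 1) d) c)); last first.
  move=> z /andP[_ Hz]; rewrite Lpow_sub !Lpow_scal.
  have -> : (h + k.+1 - z - 1 = (h + k - z - 1).+1)%N by lia.
  by have -> : (k.+1 - z - 1 = (k - z - 1).+1)%N by lia.
rewrite /Pp /onev /=; ring.
Qed.

End Claims.

End P6.
Import P6.

Module P7.

Lemma gi_inl (G1 G2 : graph) (a : gV G1) (b : gV G2) u v :
  (inl u == glue_in2 a b v :> gV (glue a b)) = (u == a) && (v == b).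
Proof.
rewrite /glue_in2; case: insubP => [y nb _|].
  by rewrite /= (negbTE nb) andbF.
by move/negbNE => ->; rewrite andbT.
Qed.

Lemma gi_inj (G1 G2 : graph) (a : gV G1) (b : gV G2) v v' : v != b ->
  (glue_in2 a b v == glue_in2 a b v' :> gV (glue a b)) = (v == v').
Proof.
move=> nb; rewrite /glue_in2 insubT /=.
case: insubP => [y nb' E|].
  by rewrite -E; apply/eqP/eqP => [[<-] //|Ev]; congr inr; apply: val_inj; rewrite /= Ev.
by move/negbNE/eqP => ->; rewrite (negbTE nb).
Qed.

Lemma gi_inr (G1 G2 : graph) (a : gV G1) (b : gV G2) v : v != b ->
  exists y, glue_in2 a b v = inr y.
Proof. by move=> nb; exists (exist _ v nb); rewrite /glue_in2 insubT. Qed.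

Lemma path_irr t : irreflexive (@gE (path_graph t)).
Proof. by move=> i; rewrite /= orbb; apply/negbTE/eqP; lia. Qed.

Lemma complete_irr s : irreflexive (@gE (complete s)).
Proof. by move=> i; rewrite /= eqxx. Qed.

Lemma glue_irr (G1 G2 : graph) (a : gV G1) (b : gV G2) :
  irreflexive (@gE G1) -> irreflexive (@gE G2) -> irreflexive (@gE (glue a b)).
Proof. by move=> I1 I2 [x|y] /=; [apply: I1 | apply: I2]. Qed.

Lemma tripod_irr g k h : irreflexive (@gE (tripod g k h)).
Proof. by apply: glue_irr; [apply: glue_irr|]; apply: path_irr. Qed.

Section Comp.
Variable n : nat.
Local Notation R := {mpoly rat[n]}.
Local Notation I := 'I_n.
Local Notation Lpow := (@Lpow n).
Local Notation Pp := (@Pp n).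

Lemma sum_delta (F : I -> R) c : \sum_c' (c' == c)%:R * F c' = F c.
Proof.
rewrite (bigD1 c) //= eqxx mul1r big1 ?addr0 //.
by move=> e /negbTE ->; rewrite mul0r.
Qed.

Lemma path_pi t c : PhiR (H := path_graph t) ord0 c (fun _ d => 'X_d) = Pp t c.
Proof.
rewrite PhiR_Phi (Phi_ext (w' := @pw n t (fun e => (e == c)%:R) (@onev n))).
  by rewrite Phi_path sum_delta.
by move=> i e; rewrite /pw /one; case: ifP; case: ifP => _ _; rewrite ?mulr1.
Qed.

Lemma path_kap t (kap : I -> R) (c : I) (w : gV (path_graph t) -> I -> R) :
  (forall v, v != ord0 -> w v =1 fun e => 'X_e * (if v == ord_max then kap e else 1)) ->
  PhiR (H := path_graph t) ord0 c w = if t == 0%N then 1 else Lpow t kap c.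
Proof.
move=> Ew; case: t w Ew => [|t] w Ew; first exact: PhiR_path0.
rewrite PhiR_Phi (Phi_ext (w' := @pw n t.+1 (fun e => (e == c)%:R) kap)).
  by rewrite Phi_path sum_delta.
move=> i e; rewrite /pw; case: (eqVneq i ord0) => [->|ni].
  have -> : ((ord0 : 'I_t.+2) == ord_max) = false by [].
  by rewrite mulr1.
by rewrite Ew.
Qed.

Definition kapv m : I -> R := fun d => PhiR (H := complete m.-1.+1) ord0 d (fun _ e => 'X_e).

Lemma lolE s t : chrom n (lollipop s t) = pair (Pp t) (kapv s).
Proof.
rewrite chromE /lollipop /pendant Phi_glue; last by rewrite path_irr.
rewrite (@Phi_root _ (complete s.-1.+1) ord0); apply: eq_bigr => c _.
rewrite eqxx path_pi; congr (_ * _).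
by rewrite /kapv; apply: PhiR_ext => u /negbTE -> d; rewrite mulr1.
Qed.

Lemma pendE (G : graph) (r : gV G) t :
  chrom n (pendant r t) = \sum_c 'X_c * Pp t c * PhiR r c (fun _ d => 'X_d).
Proof.
rewrite chromE /pendant Phi_glue; last by rewrite path_irr.
rewrite (Phi_root r); apply: eq_bigr => c _.
rewrite eqxx path_pi; congr (_ * _).
by apply: PhiR_ext => u /negbTE -> d; rewrite mulr1.
Qed.

End Comp.

End P7.
Import P7.

Module P8.

Definition g1 g k : gV (tripod1 g k) := inl ord_max.
Definition k1 g k : gV (tripod1 g k) :=
  glue_in2 (ord0 : gV (path_graph g)) (ord0 : gV (path_graph k)) ord_max.
Definition cen g k : gV (tripod1 g k) := inl ord0.

Lemma ordmax0 t : (ord_max == ord0 :> 'I_t.+1) = (t == 0%N).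
Proof. by rewrite -val_eqE. Qed.

Lemma inl_eq (A B : eqType) (x y : A) : (inl x == inl y :> A + B) = (x == y).
Proof. by []. Qed.

Section Tri.
Variable n : nat.
Local Notation R := {mpoly rat[n]}.
Local Notation I := 'I_n.
Local Notation Lpow := (@Lpow n).
Local Notation Pp := (@Pp n).

Lemma stepD g k h (kap : I -> R) (c : I) :
  Phi (H := tripod1 g k) (fun u e =>
     (if u == g1 g k then (e == c)%:R * (if k1 g k == g1 g k then kap e else 1)
      else 'X_e * (if u == k1 g k then kap e else 1)) *
     (if u == cen g k then Pp h e else 1))
  = Lpow g (fun d => Pp h d * Lpow k kap d) c.
Proof.
rewrite /tripod1 Phi_glue; last by rewrite path_irr.
rewrite -(sum_delta (Lpow g _) c) -Phi_path'; apply: Phi_ext => i e.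
have Ek : forall v : gV (path_graph k), v != ord0 ->
   (fun e => (if @glue_in2 (path_graph g) ord0 (path_graph k) ord0 v == g1 g k then (e == c)%:R * (if k1 g k == g1 g k then kap e else 1)
      else 'X_e * (if @glue_in2 (path_graph g) ord0 (path_graph k) ord0 v == k1 g k then kap e else 1)) *
     (if @glue_in2 (path_graph g) ord0 (path_graph k) ord0 v == cen g k then Pp h e else 1)) =1
   fun e => 'X_e * (if v == ord_max then kap e else 1).
  move=> v nv e'; rewrite /g1 /k1 /cen.
  rewrite ![_ == inl _]eq_sym !gi_inl !(negbTE nv) !andbF gi_inj //.
  by rewrite mulr1.
rewrite (@path_kap n k kap e _ Ek).
rewrite /g1 /k1 /cen [glue_in2 _ _ _ == _]eq_sym !gi_inl !ordmax0 !inl_eq.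
clear Ek; case: g i => [|g] i.
  rewrite (ord1_eq i ord0) eqxx /=.
  by case: k => [|k] /=; rewrite ?mulr1 ?mul1r; ring.
case: (eqVneq i ord0) => [->|ni0] /=.
  by case: k => [|k] /=; rewrite ?mulr1 ?mul1r; ring.
by rewrite !mulr1.
Qed.
Definition wV g k h (kap : I -> R) (c : I) : gV (tripod g k h) -> I -> R :=
  fun v e => if v == tri_gend g k h
             then (e == c)%:R * (if tri_kend g k h == tri_gend g k h then kap e else 1)
             else 'X_e * (if v == tri_kend g k h then kap e else 1).
Arguments wV : clear implicits.

Lemma stepC g k h (kap : I -> R) (c : I) :
  Phi (wV g k h kap c) = Lpow g (fun d => Pp h d * Lpow k kap d) c.
Proof.
rewrite -stepD /tripod Phi_glue; last by rewrite path_irr.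
apply: Phi_ext => u e; rewrite /wV /tri_gend /tri_kend !inl_eq.
congr (_ * _); case: ifP => // _.
rewrite -path_pi; apply: PhiR_ext => v nv d.
have [y ->] := gi_inr (inl ord0 : gV (tripod1 g k)) nv.
by rewrite mulr1.
Qed.

Lemma SgraphE' (G : graph) (r : gV G) g k h m :
  chrom n (Sgraph r g k h m) =
  \sum_c 'X_c * Lpow g (fun d => Pp h d * Lpow k (@kapv n m) d) c * PhiR r c (fun _ d => 'X_d).
Proof.
rewrite chromE /Sgraph Phi_glue; last by rewrite complete_irr.
rewrite /Sgraph1 Phi_glue; last by rewrite tripod_irr.
rewrite (Phi_root r); apply: eq_bigr => c _.
rewrite -stepC gi_inl (eqxx r) /=.
congr (_ * _); last first.
  apply: PhiR_ext => u nu d.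
  by rewrite gi_inl (negbTE nu) /= !mulr1.
rewrite /wV PhiR_delta mulrA; congr (_ * _).
apply: PhiR_ext => v nv d; rewrite gi_inj //.
Qed.


End Tri.

End P8.
Import P8.

Import Num.Theory.
Module P9.

Section Final.
Variable n : nat.
Local Notation R := {mpoly rat[n]}.
Local Notation I := 'I_n.
Local Notation Lpow := (@Lpow n).
Local Notation Pp := (@Pp n).

Lemma Lpow_sumscal t (J : Type) (s : seq J) (P : pred J) (a : J -> R) (F : J -> I -> R) c :
  Lpow t (fun d => \sum_(i <- s | P i) a i * F i d) c = \sum_(i <- s | P i) a i * Lpow t (F i) c.
Proof. by rewrite Lpow_sum; apply: eq_bigr => i _; rewrite Lpow_scal. Qed.

Lemma EPp a b d : Lpow a (Pp b) d = Pp (a + b) d.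
Proof. by rewrite /Pp Lpow_addn. Qed.

Lemma EPp_eta a b d : Lpow a (fun x => Pp b x) d = Pp (a + b) d.
Proof. by rewrite /Pp Lpow_addn. Qed.

Lemma EPp_eta2 a b h d : Lpow a (fun x => Lpow b (Pp h) x) d = Pp (a + (b + h)) d.
Proof. by rewrite /Pp Lpow_addn; apply: Lpow_ext => x; rewrite Lpow_addn. Qed.

Lemma Ekap s d : @kapv n s d = (s.-1)`!%:R * eps (s.-1) d.
Proof. exact: kappa_eps. Qed.

Lemma Elol s t : pair (Pp t) (@kapv n s) = (s.-1)`!%:R * pair (Pp t) (eps s.-1).
Proof.
rewrite /pair mulr_sumr; apply: eq_bigr => e _; rewrite Ekap; ring.
Qed.

Lemma step1 g k h j (c : I) :
  Lpow g (fun d => Pp h d * Lpow k (@kapv n j.+1) d) c =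
  j`!%:R * (\sum_(0 <= z < j.+1) mesym n rat z * Pp (g + h + k + j.+1 - z - 1) c
           - \sum_(1 <= z < j.+1) ((z.-1)`!%:R : rat)^-1 *:
                  (pair (Pp h) (@kapv n z) * Pp (g + k + j.+1 - z - 1) c))
  + \sum_(0 <= z < k) (pair (Pp z) (@kapv n j.+1) * Pp (g + h + k - z - 1) c
                       - pair (Pp (h + z)) (@kapv n j.+1) * Pp (g + k - z - 1) c).
Proof.
rewrite (Lpow_ext g (claimK (@kapv n j.+1) h k)) Lpow_add Lpow_sum.
rewrite -Lpow_addn.
have EB : (fun d => Pp h d * @kapv n j.+1 d) =1
  (fun d => j`!%:R * (\sum_(0 <= z < j.+1) mesym n rat z * Lpow (j - z) (Pp h) d
     - \sum_(1 <= z < j.+1) pair (Pp h) (eps z.-1) * Pp (j - z) d)).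
  by move=> d; rewrite Ekap /= mulrCA claimB.
rewrite (Lpow_ext _ EB) Lpow_scal Lpow_sub !Lpow_sumscal.
congr (_ * (_ - _) + _).
- apply: eq_big_nat => z /andP[_ Hz]; rewrite EPp_eta2.
  congr (_ * Pp _ _); lia.
- apply: eq_big_nat => z /andP[Hz1 Hz]; rewrite EPp_eta Elol -mul_mpolyC.
  rewrite (_ : (g + k + (j - z))%N = (g + k + j.+1 - z - 1)%N); last by lia.
  rewrite mulrA mulrA -mpolyC_nat -mpolyCM mulVf ?mul1r //.
  by rewrite pnatr_eq0 -lt0n fact_gt0.
- apply: eq_big_nat => z /andP[_ Hz]; rewrite Lpow_sub !Lpow_scal !EPp.
  congr (_ * Pp _ _ - _ * Pp _ _); lia.
Qed.

End Final.

End P9.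
Import P9.

Theorem corollary4p6 (G : graph) (r : gV G)
  (HGsym : ssrbool.symmetric (@gE G)) (HGirr : irreflexive (@gE G))
  (g k m h : nat) (Hm : (1 <= m)%N) (Hh : (1 <= h)%N) (n : nat) :
  chrom n (Sgraph r g k h m) =
    (m.-1)`!%:R *
      (\sum_(0 <= z < m)
          mesym n rat z * chrom n (pendant r (g + h + k + m - z - 1))
       - \sum_(1 <= z < m)
          ((z.-1)`!%:R : rat)^-1 *:
            (chrom n (lollipop z h) * chrom n (pendant r (g + k + m - z - 1))))
    + \sum_(0 <= z < k)
        (chrom n (lollipop m z) * chrom n (pendant r (g + h + k - z - 1))
         - chrom n (lollipop m (h + z)) * chrom n (pendant r (g + k - z - 1))).
Proof.
case: m Hm => [//|j] _ /=.
set y := fun c : 'I_n => PhiR r c (fun _ d => 'X_d).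
have E1 : \sum_(0 <= z < j.+1) mesym n rat z * chrom n (pendant r (g + h + k + j.+1 - z - 1)) =
  \sum_c 'X_c * y c * (\sum_(0 <= z < j.+1) mesym n rat z * @Pp n (g + h + k + j.+1 - z - 1) c).
  under eq_bigr => z _ do rewrite pendE mulr_sumr.
  rewrite exchange_big; apply: eq_bigr => c _; rewrite mulr_sumr.
  by apply: eq_bigr => z _; rewrite /y; ring.
have E2 : \sum_(1 <= z < j.+1) ((z.-1)`!%:R : rat)^-1 *:
            (chrom n (lollipop z h) * chrom n (pendant r (g + k + j.+1 - z - 1))) =
  \sum_c 'X_c * y c * (\sum_(1 <= z < j.+1) ((z.-1)`!%:R : rat)^-1 *:
                  (pair (@Pp n h) (@kapv n z) * @Pp n (g + k + j.+1 - z - 1) c)).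
  under eq_bigr => z _ do rewrite lolE pendE -mul_mpolyC !mulr_sumr.
  rewrite exchange_big; apply: eq_bigr => c _; rewrite mulr_sumr.
  by apply: eq_bigr => z _; rewrite -mul_mpolyC /y; ring.
have E3 : \sum_(0 <= z < k)
        (chrom n (lollipop j.+1 z) * chrom n (pendant r (g + h + k - z - 1))
         - chrom n (lollipop j.+1 (h + z)) * chrom n (pendant r (g + k - z - 1))) =
  \sum_c 'X_c * y c * \sum_(0 <= z < k) (pair (@Pp n z) (@kapv n j.+1) * @Pp n (g + h + k - z - 1) c
                       - pair (@Pp n (h + z)) (@kapv n j.+1) * @Pp n (g + k - z - 1) c).
  under eq_bigr => z _ do rewrite !lolE !pendE !mulr_sumr -sumrB.
  rewrite exchange_big; apply: eq_bigr => c _; rewrite mulr_sumr.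
  by apply: eq_bigr => z _; rewrite /y; ring.
rewrite E1 E2 E3 SgraphE' -sumrB mulr_sumr -big_split /=; apply: eq_bigr => c _.
by rewrite step1 /y; ring.
Qed.
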